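(* Let $1\le p\le\infty$ and let $X$ be an Asymptotic $\ell_p$ space. Then $X$ admits a uniformly unique $l$-joint spreading model with respect to $\mathscr{F}_0(X)$, and every $l$-joint spreading model generated by sequences from $\mathscr{F}_0(X)$ is equivalent to the unit vector basis of $\ell_p$ (of $c_0$ if $p=\infty$).
   Context: $\mathscr{F}_0(X)$ is the set of normalized weakly null Schauder basic sequences in $X$. For $n\in\mathbb{N}$ and $C\ge1$, the game $G(p,n,C)$ has $n$ rounds; in each round player (S) chooses a closed finite-codimensional subspace $Y$ of $X$ and player (V) chooses a norm-one $y\in Y$; (S) wins if the resulting $(y_i)_{i=1}^n$ is $C$-equivalent to the unit vector basis of $\ell_p^n$ ($c_0^n$ if $p=\infty$). $X$ is Asymptotic $\ell_p$ (or $C$-Asymptotic $\ell_p$) if there is $C$ such that for every $n$, (S) has a winning strategy in $G(p,n,C)$. For infinite $M\subset\mathbb{N}$ with elements $M(1)<M(2)<\cdots$, a strict plegma family in $[M]^k$ is a sequence $(s_i)_{i=1}^l$ of $k$-element subsets $s_i=\{s_i(1)<\cdots<s_i(k)\}$ of $M$ with $s_{i_1}(j_1)<s_{i_2}(j_2)$ whenever $j_1<j_2$ and $s_{i_1}(j)<s_{i_2}(j)$ whenever $i_1<i_2$. An $l$-tuple $((x^i_n)_n)_{i=1}^l$ generates $(e^i_n)_{i\le l,n}$ (in a Banach space $(E,\|\cdot\|_* )$) as an $l$-joint spreading model if for some infinite $M$ there is a null sequence $(\delta_k)$ with $\big|\|\sum_{j\le k}\sum_{i\le l}a_{ij}x^i_{s_i(j)}\|-\|\sum_{j\le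 k}\sum_{i\le l}a_{ij}e^i_j\|_*\big|<\delta_k$ for all $k$, all $(a_{ij})\subset[-1,1]$ and all strict plegma families $(s_i)$ in $[M]^k$ with $M(k)\le s_1(1)$. Two families indexed by the same set are $K$-equivalent if there are $c,C>0$, $C/c\le K$, with $c\|\sum a_{ij}e^i_j\|\le\|\sum a_{ij}f^i_j\|\le C\|\sum a_{ij}e^i_j\|$. $X$ admits a uniformly unique $l$-joint spreading model with respect to $\mathscr{F}$ if there is $K>0$ such that for every $l$, any two $l$-joint spreading models generated by $l$-tuples of sequences in $\mathscr{F}$ are $K$-equivalent. *)

(* Defs.v *)
From HB Require Import structures.
From mathcomp Require Import all_boot all_order all_algebra.
From mathcomp Require Import all_classical all_reals all_analysis.
Set Implicit Arguments. Unset Strict Implicit. Unset Printing Implicit Defensive.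
Import Order.TTheory GRing.Theory Num.Theory.
Import numFieldNormedType.Exports.
Local Open Scope classical_set_scope.
Local Open Scope ring_scope.

Definition lpnorm {R : realType} (p : \bar R) {I : finType} (a : I -> R) : R :=
  match p with
  | EFin q => (\sum_(i : I) `|a i| `^ q) `^ q^-1
  | EPInf => \big[Num.max/0]_(i : I) `|a i|
  | ENInf => 0
  end.

Definition is_linear_functional {R : realType} {X : normedModType R} (f : X -> R) :=
  forall (a : R) (x y : X), f (a *: x + y) = a * f x + f y.

Definition weakly_null {R : realType} {X : normedModType R} (xs : nat -> X) :=
  forall f : X -> R, is_linear_functional f -> continuous f ->
    (fun n => f (xs n)) @ \oo --> (0 : R).

Definition lin_span {R : realType} {X : normedModType R} (xs : nat -> X) : set X :=
  [set x | exists (n : nat) (a : nat -> R), x = \sum_(i < n) a i *: xs i].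

Definition schauder_basic {R : realType} {X : normedModType R} (xs : nat -> X) :=
  forall x : X, closure (lin_span xs) x ->
    exists! a : nat -> R, (fun n => \sum_(i < n) a i *: xs i) @ \oo --> x.

Definition F0 {R : realType} {X : normedModType R} (xs : nat -> X) :=
  (forall n, `|xs n| = 1) /\ weakly_null xs /\ schauder_basic xs.

Definition fin_codim_closed {R : realType} {X : normedModType R} (Y : set X) :=
  closed Y /\ Y 0 /\ (forall (a : R) x y, Y x -> Y y -> Y (a *: x + y)) /\
  exists (m : nat) (z : 'I_m -> X), forall x : X,
    exists (y : X) (b : 'I_m -> R), Y y /\ x = y + \sum_(i < m) b i *: z i.

Definition equiv_lp_fin {R : realType} {X : normedModType R} (p : \bar R) (C : R)
    (n : nat) (y : nat -> X) :=
  exists c C' : R, 0 < c /\ 0 < C' /\ C' / c <= C /\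
    forall a : 'I_n -> R,
      c * lpnorm p a <= `|\sum_(i < n) a i *: y (val i)| /\
      `|\sum_(i < n) a i *: y (val i)| <= C' * lpnorm p a.

(* a strategy of (S) in G(p,n,C): given the history (y_1,...,y_{i-1}) of (V)'s moves,
   it chooses a closed finite-codimensional subspace; it is winning if every play
   consistent with it is won by (S). *)
Definition winning_strategy {R : realType} {X : normedModType R} (p : \bar R) (n : nat)
    (C : R) (sigma : seq X -> set X) :=
  (forall h, fin_codim_closed (sigma h)) /\
  forall y : nat -> X,
    (forall i, (i < n)%N -> sigma (mkseq y i) (y i) /\ `|y i| = 1) ->
    equiv_lp_fin p C n y.

Definition asymptotic_lp {R : realType} (p : \bar R) (X : normedModType R) :=
  exists C : R, 1 <= C /\
    forall n : nat, exists sigma : seq X -> set X, winning_strategy p n C sigma.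

(* infinite M subset of N is encoded by its increasing enumeration m (M(t+1) = m t). *)
Definition strict_plegma (l k : nat) (m : nat -> nat) (s : 'I_l -> 'I_k -> nat) :=
  (forall i j, exists t, s i j = m t) /\
  (forall (i1 i2 : 'I_l) (j1 j2 : 'I_k), (j1 < j2)%N -> (s i1 j1 < s i2 j2)%N) /\
  (forall (i1 i2 : 'I_l) (j : 'I_k), (i1 < i2)%N -> (s i1 j < s i2 j)%N).

Definition jsm_generates {R : realType} {X : normedModType R} {l : nat}
    (xs : 'I_l -> nat -> X) {E : normedModType R} (e : 'I_l -> nat -> E) :=
  exists m : nat -> nat, (forall t, (m t < m t.+1)%N) /\
  exists delta : nat -> R, delta @ \oo --> (0 : R) /\
  forall (k : nat) (a : 'I_l -> 'I_k -> R) (s : 'I_l -> 'I_k -> nat),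
    (forall i j, `|a i j| <= 1) ->
    strict_plegma m s ->
    (forall (i0 : 'I_l) (j0 : 'I_k), val i0 = 0%N -> val j0 = 0%N -> (m k.-1 <= s i0 j0)%N) ->
    `| `|\sum_(j < k) \sum_(i < l) a i j *: xs i (s i j)|
       - `|\sum_(j < k) \sum_(i < l) a i j *: e i (val j)| | < delta k.

Definition K_equiv {R : realType} {l : nat} (K : R) {E1 E2 : normedModType R}
    (e1 : 'I_l -> nat -> E1) (e2 : 'I_l -> nat -> E2) :=
  exists c C : R, 0 < c /\ 0 < C /\ C / c <= K /\
    forall (k : nat) (a : 'I_l -> 'I_k -> R),
      c * `|\sum_(j < k) \sum_(i < l) a i j *: e1 i (val j)|
        <= `|\sum_(j < k) \sum_(i < l) a i j *: e2 i (val j)| /\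
      `|\sum_(j < k) \sum_(i < l) a i j *: e2 i (val j)|
        <= C * `|\sum_(j < k) \sum_(i < l) a i j *: e1 i (val j)|.

Definition equiv_lp_basis {R : realType} (p : \bar R) {l : nat} {E : normedModType R}
    (e : 'I_l -> nat -> E) :=
  exists c C : R, 0 < c /\ 0 < C /\
    forall (k : nat) (a : 'I_l -> 'I_k -> R),
      c * lpnorm p (fun ij : 'I_l * 'I_k => a ij.1 ij.2)
        <= `|\sum_(j < k) \sum_(i < l) a i j *: e i (val j)| /\
      `|\sum_(j < k) \sum_(i < l) a i j *: e i (val j)|
        <= C * lpnorm p (fun ij : 'I_l * 'I_k => a ij.1 ij.2).

Definition uniformly_unique_jsm {R : realType} (X : normedModType R) :=
  exists K : R, 0 < K /\
    forall (l : nat), (0 < l)%N ->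
    forall (xs ys : 'I_l -> nat -> X)
           (E1 : completeNormedModType R) (e1 : 'I_l -> nat -> E1)
           (E2 : completeNormedModType R) (e2 : 'I_l -> nat -> E2),
      (forall i, F0 (xs i)) -> (forall i, F0 (ys i)) ->
      jsm_generates xs e1 -> jsm_generates ys e2 -> K_equiv K e1 e2.

(* Main.v *)
Require Import Defs.
From HB Require Import structures.
From mathcomp Require Import all_boot all_order all_algebra.
From mathcomp Require Import all_classical all_reals all_analysis.
From mathcomp Require Import lra.
Import Order.TTheory GRing.Theory Num.Theory.
Import numFieldNormedType.Exports.
Set Implicit Arguments. Unset Strict Implicit. Unset Printing Implicit Defensive.
Local Open Scope classical_set_scope.
Local Open Scope ring_scope.

Section P1.
Variables (R : realType) (X : normedModType R).

Definition linsub (Y : set X) := Y 0 /\ (forall (a : R) x y, Y x -> Y y -> Y (a *: x + y)).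

Lemma linsubZ Y a x : linsub Y -> Y x -> Y (a *: x).
Proof. by move=> [Y0 YL] Yx; rewrite -[_ *: _]addr0; apply: YL. Qed.
Lemma linsubD Y x y : linsub Y -> Y x -> Y y -> Y (x + y).
Proof. by move=> [Y0 YL] Yx Yy; rewrite -[x]scale1r; apply: YL. Qed.
Lemma linsubN Y x : linsub Y -> Y x -> Y (- x).
Proof. by move=> LY Yx; rewrite -scaleN1r; apply: linsubZ. Qed.
Lemma linsubB Y x y : linsub Y -> Y x -> Y y -> Y (x - y).
Proof. by move=> LY Yx Yy; apply: linsubD => //; apply: linsubN. Qed.

Definition dist (Y : set X) (v : X) := inf [set r | exists y, Y y /\ r = `|v - y|].

Lemma dist_le Y v y : Y y -> dist Y v <= `|v - y|.
Proof.
move=> Yy; apply: ge_inf; last by exists y.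
by exists 0 => r [y' [_ ->]].
Qed.

Lemma dist_ge0 Y v : Y 0 -> 0 <= dist Y v.
Proof.
move=> Y0; apply: lb_le_inf; first by exists `|v - 0|, 0.
by move=> r [y' [_ ->]].
Qed.

Lemma dist_lip Y v w : Y 0 -> dist Y v <= dist Y w + `|v - w|.
Proof.
move=> Y0; rewrite -lerBlDr; apply: lb_le_inf; first by exists `|w - 0|, 0.
move=> r [y [Yy ->]]; rewrite lerBlDr; apply: le_trans (dist_le v Yy) _.
have -> : v - y = (w - y) + (v - w) by rewrite [RHS]addrC addrA subrK.
exact: (ler_normD (w - y) (v - w)).
Qed.

Lemma dist_pos Y v : closed Y -> Y 0 -> ~ Y v -> 0 < dist Y v.
Proof.
move=> cY Y0 nYv; rewrite lt_neqAle dist_ge0 // andbT; apply/negP => /eqP d0.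
apply: nYv; apply: cY => B /nbhs_ballP [e e0 eB].
have [r [y [Yy ->]] ry] : exists2 r, [set r | exists y, Y y /\ r = `|v - y|] r & r < e.
  by apply: inf_lt; [exists `|v - 0|, 0 | rewrite -/(dist Y v) -d0].
by exists y; split => //; apply: eB; rewrite -ball_normE.
Qed.


Lemma lip_continuous (V : normedModType R) (f : V -> R) (L : R) :
  0 < L -> (forall x y, `|f x - f y| <= L * `|x - y|) -> continuous f.
Proof.
move=> L0 fL x; apply/cvgrPdist_lt => e e0.
apply/nbhs_ballP; exists (e / L); first (simpl; by rewrite divr_gt0).
move=> t; rewrite -ball_normE /= => xt; apply: le_lt_trans (fL _ _) _.
by rewrite mulrC -ltr_pdivlMr.
Qed.


Lemma dist_lip2 Y v w : Y 0 -> `|dist Y v - dist Y w| <= `|v - w|.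
Proof.
move=> Y0; have h1 := dist_lip v w Y0; have h2 := dist_lip w v Y0.
rewrite distrC in h2; rewrite ler_norml; apply/andP; split; lra.
Qed.

Definition Lz m (z : 'I_m -> X) (b : 'rV[R]_m) : X := \sum_(j < m) b ord0 j *: z j.

Lemma coord_le m (b : 'rV[R]_m) j : `|b ord0 j| <= `|b|.
Proof.
change (`|b ord0 j| <= mx_norm b); rewrite mx_normrE.
exact: (le_bigmax _ (fun ij : 'I_1 * 'I_m => `|b ij.1 ij.2|) (ord0, j)).
Qed.

Lemma LzB m z (b b' : 'rV[R]_m) : Lz z (b - b') = Lz z b - Lz z b'.
Proof. by rewrite /Lz -sumrB; apply: eq_bigr => j _; rewrite !mxE scalerBl. Qed.

Lemma LzD m z (b b' : 'rV[R]_m) : Lz z (b + b') = Lz z b + Lz z b'.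
Proof. by rewrite /Lz -big_split; apply: eq_bigr => j _; rewrite !mxE scalerDl. Qed.

Lemma LzZ m z a (b : 'rV[R]_m) : Lz z (a *: b) = a *: Lz z b.
Proof. by rewrite /Lz scaler_sumr; apply: eq_bigr => j _; rewrite !mxE scalerA. Qed.

Lemma Lz_norm m z (b : 'rV[R]_m) : `|Lz z b| <= `|b| * \sum_(j < m) `|z j|.
Proof.
rewrite /Lz mulr_sumr; apply: le_trans (ler_norm_sum _ _ _) _.
apply: ler_sum => j _; rewrite normrZ; apply: ler_wpM2r => //; exact: coord_le.
Qed.


Lemma LB (Y : set X) m (z : 'I_m -> X) : closed Y -> linsub Y ->
  (forall b, Y (Lz z b) -> b = 0) ->
  exists2 c, 0 < c & forall b y, Y y -> c * `|b| <= `|y + Lz z b|.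
Proof.
move=> cY LY indep; have Y0 := LY.1.
pose g := fun b => dist Y (Lz z b).
have gc : continuous g.
  apply: (@lip_continuous _ g (1 + \sum_(j < m) `|z j|)).
    by apply: ltr_pwDl => //; apply: sumr_ge0.
  move=> b b'; apply: le_trans (dist_lip2 _ _ Y0) _.
  rewrite -LzB; apply: le_trans (Lz_norm _ _) _.
  rewrite mulrC; apply: ler_wpM2r => //; rewrite lerDr //.
pose S := [set b : 'rV[R]_m | `|b| = 1].
have Scl : closed S.
  have -> : S = (fun b : 'rV[R]_m => `|b|) @^-1` [set x : R | x = 1] by [].
  apply: preimage_closed; last exact: closed_eq.
  by move=> x _; apply: norm_continuous.
have Sb : bounded_set S.
  rewrite /= /bounded_near; near=> M => b /= Sb1; rewrite Sb1; near: M; apply: nbhs_pinfty_ge; exact: num_real.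
have Sco : compact S by apply: bounded_closed_compact.
have gSco : compact (g @` S).
  by apply: continuous_compact => //; apply: continuous_subspaceT.
have gScl : closed (g @` S) by apply: compact_closed => //; exact: norm_hausdorff.
have n0 : ~ (g @` S) 0.
  move=> [b Sb0 gb0]; have : 0 < g b.
    apply: dist_pos => // /indep b0; move: Sb0; rewrite /S /= b0 normr0.
    by move=> /esym/eqP; rewrite oner_eq0.
  by rewrite gb0 ltxx.
have : open (~` (g @` S)) by rewrite openC.
rewrite openE => /(_ 0 n0) /nbhs_ballP [e e0 eB].
exists e => // b y Yy.
have [->|bn0] := eqVneq b 0; first by rewrite normr0 mulr0.
have t0 : 0 < `|b| by rewrite normr_gt0.
pose b' := `|b|^-1 *: b.
have Sb' : S b' by rewrite /S /= normrZ normfV normr_id mulVf // gt_eqF.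
have ge : e <= g b'.
  rewrite leNgt; apply/negP => gb'; apply: (eB (g b')); last by exists b'.
  by rewrite -ball_normE /= sub0r normrN ger0_norm //; apply: dist_ge0.
have : g b' <= `|Lz z b' - (- (`|b|^-1 *: y))|.
  apply: dist_le; apply: linsubN => //; exact: linsubZ.
rewrite opprK LzZ -scalerDr normrZ normfV normr_id addrC => h.
rewrite -ler_pdivlMr // mulrC; exact: le_trans ge h.
Unshelve. all: by end_near.
Qed.


Lemma KL_indep (Y : set X) m (z : 'I_m -> X) : closed Y -> linsub Y ->
  (forall b, Y (Lz z b) -> b = 0) ->
  (forall v, exists y b, Y y /\ v = y + Lz z b) ->
  forall x : nat -> X, weakly_null x -> forall eps, 0 < eps ->
  \forall n \near \oo, exists y, Y y /\ `|x n - y| < eps.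
Proof.
move=> cY LY indep span x wx eps eps0.
have [c c0 hc] := LB cY LY indep.
have [F hF] : {F : X -> X * 'rV[R]_m &
    forall v, Y (F v).1 /\ v = (F v).1 + Lz z (F v).2}.
  apply: (@choice X (X * 'rV[R]_m) (fun v p => Y p.1 /\ v = p.1 + Lz z p.2)) => v; have [y [b [Yy ->]]] := span v; by exists (y, b).
have uniq y1 b1 y2 b2 : Y y1 -> Y y2 -> y1 + Lz z b1 = y2 + Lz z b2 -> b1 = b2.
  move=> Y1 Y2 E; apply/eqP; rewrite -subr_eq0; apply/eqP/indep.
  have -> : Lz z (b1 - b2) = y2 - y1.
    rewrite LzB; apply/eqP; rewrite subr_eq addrAC -E addrC addKr //.
  exact: linsubB.
have lin a v w : (F (a *: v + w)).2 = a *: (F v).2 + (F w).2.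
  have [Y1 E1] := hF (a *: v + w); have [Yv Ev] := hF v; have [Yw Ew] := hF w.
  apply: (uniq _ _ (a *: (F v).1 + (F w).1) _ Y1).
    by apply: LY.2.
  rewrite -E1 LzD LzZ {1}Ev {1}Ew scalerDr addrACA //.
pose f (j : 'I_m) (v : X) := (F v).2 ord0 j.
have fB j v w : f j v - f j w = f j (v - w).
  rewrite /f; have := lin 1 (v - w) w; rewrite !scale1r subrK => ->.
  by rewrite mxE addrK.
have fb j v : `|f j v| <= c^-1 * `|v|.
  have [Yv Ev] := hF v; rewrite ler_pdivlMl //.
  have -> : `|v| = `|(F v).1 + Lz z (F v).2| by rewrite -Ev.
  apply: le_trans (hc _ _ Yv); apply: ler_wpM2l; first exact: ltW.
  exact: coord_le.
have fc j : continuous (f j).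
  apply: (@lip_continuous _ (f j) c^-1); first by rewrite invr_gt0.
  by move=> v w; rewrite fB; apply: fb.
have fl j : is_linear_functional (f j).
  by move=> a v w; rewrite /f lin !mxE.
pose S := \sum_(j < m) `|z j|.
have S0 : 0 <= S by apply: sumr_ge0.
pose eta := eps / (1 + S).
have eta0 : 0 < eta by rewrite divr_gt0 // ltr_pwDl.
have : \forall n \near \oo, forall j, `|f j (x n)| < eta.
  apply: filter_forall => j; have := wx (f j) (fl j) (fc j).
  by move/cvgr0_norm_lt => /(_ eta eta0).
apply: filterS => n hn; exists (F (x n)).1; split; first exact: (hF _).1.
have [_ E] := hF (x n); rewrite [X in `|X - _|]E addrC addKr.
rewrite /Lz; apply: le_lt_trans (ler_norm_sum _ _ _) _.
apply: (@le_lt_trans _ _ (eta * S)).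
  rewrite /S mulr_sumr; apply: ler_sum => j _; rewrite normrZ.
  by apply: ler_wpM2r => //; apply: ltW; apply: hn.
have -> : eps = eta * (1 + S) by rewrite /eta divfK // gt_eqF // ltr_pwDl.
by rewrite ltr_pM2l // ltrDr.
Qed.


Lemma Lz_split m (z : 'I_m.+1 -> X) (i : 'I_m.+1) (c : 'rV[R]_m.+1) :
  Lz z c = c ord0 i *: z i +
    Lz (fun j => z (lift i j)) (\row_j c ord0 (lift i j)).
Proof.
rewrite /Lz (bigD1_ord i) //=; congr (_ + _); apply: eq_bigr => j _.
by rewrite mxE.
Qed.

Lemma KL_Lz (Y : set X) : closed Y -> linsub Y ->
  forall m (z : 'I_m -> X), (forall v, exists y b, Y y /\ v = y + Lz z b) ->
  forall x : nat -> X, weakly_null x -> forall eps, 0 < eps ->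
  \forall n \near \oo, exists y, Y y /\ `|x n - y| < eps.
Proof.
move=> cY LY; elim=> [|m IH] z span.
  have indep : forall b : 'rV[R]_0, Y (Lz z b) -> b = 0 by move=> b _; apply/rowP => -[].
  exact: (KL_indep cY LY indep span).
case: (pselect (forall b, Y (Lz z b) -> b = 0)) => [indep|dep].
  exact: (KL_indep cY LY indep span).
have [b [Yb bn0]] : exists b, Y (Lz z b) /\ b != 0.
  case: (pselect (exists b, Y (Lz z b) /\ b != 0)) => // nex; exfalso; apply: dep.
  move=> b Yb; apply/eqP; apply/negPn/negP => bn0; apply: nex; by exists b.
have [i bi] : exists i, b ord0 i != 0.
  case: (pselect (exists i, b ord0 i != 0)) => // nex; exfalso; move/eqP: bn0; apply.
  apply/rowP => j; rewrite mxE; apply/eqP; apply/negPn/negP => h; apply: nex; by exists j.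
apply: (IH (fun j => z (lift i j))) => v.
have [y [c [Yy Ev]]] := span v.
pose k := c ord0 i / b ord0 i.
pose w := Lz z b.
exists (y + k *: w), (\row_j (c ord0 (lift i j) - k * b ord0 (lift i j))); split.
  apply: linsubD => //; exact: linsubZ.
have Ew := Lz_split z i b; have Ec := Lz_split z i c.
have ci : c ord0 i = k * b ord0 i by rewrite /k divfK.
rewrite Ev Ec /w Ew ci -scalerA.
have -> : (\row_j (c ord0 (lift i j) - k * b ord0 (lift i j)) : 'rV[R]_m) =
  \row_j c ord0 (lift i j) - k *: \row_j b ord0 (lift i j).
  by apply/rowP => j; rewrite !mxE.
rewrite LzB LzZ scalerDr.
set A := Lz _ (\row_j c ord0 (lift i j)).
set B := Lz _ (\row_j b ord0 (lift i j)).
set Z := b ord0 i *: z i.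
rewrite -addrA; congr (_ + _).
by rewrite -addrA [k *: B + _]addrC subrK.
Qed.


Lemma KL (Y : set X) (x : nat -> X) : fin_codim_closed Y -> weakly_null x ->
  forall eps, 0 < eps -> exists N, forall n, (N <= n)%N ->
  exists y, Y y /\ `|x n - y| < eps.
Proof.
move=> [cY [Y0 [YL [m [z span]]]]] wx eps eps0.
have LY : linsub Y by [].
have span' : forall v, exists y b, Y y /\ v = y + Lz z b.
  move=> v; have [y [b [Yy Ev]]] := span v; exists y, (\row_j b j); split => //.
  by rewrite Ev /Lz; congr (_ + _); apply: eq_bigr => j _; rewrite mxE.
have := KL_Lz cY LY span' wx eps0.
case=> N _ hN; exists N => n Nn; exact: hN.
Qed.

Lemma KL1 (Y : set X) (x : nat -> X) : fin_codim_closed Y -> weakly_null x ->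
  (forall n, `|x n| = 1) ->
  forall eps, 0 < eps -> exists N, forall n, (N <= n)%N ->
  exists y, Y y /\ `|y| = 1 /\ `|x n - y| < eps.
Proof.
move=> fY wx x1 eps eps0.
pose e' := Num.min (eps / 2) 1.
have e'0 : 0 < e' by rewrite lt_min ltr01 andbT divr_gt0.
have [N hN] := KL fY wx e'0; exists N => n Nn.
have [y' [Yy' xy']] := hN n Nn.
have e'1 : e' <= 1 by rewrite ge_min lexx orbT.
have e'2 : e' <= eps / 2 by rewrite ge_min lexx.
have ny' : `|(`|y'| - 1)| <= `|x n - y'|.
  by rewrite -(x1 n) distrC; exact: (ler_dist_dist (x n) y').
have t0 : 0 < `|y'|.
  rewrite normr_gt0; apply/negP => /eqP y0; move: xy'; rewrite y0 subr0 x1.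
  by rewrite ltNge e'1.
have LY : linsub Y by have [_ [Y0 [YL _]]] := fY.
exists (`|y'|^-1 *: y'); split; first exact: linsubZ.
split; first by rewrite normrZ normfV normr_id mulVf // gt_eqF.
have -> : x n - `|y'|^-1 *: y' = (x n - y') + (y' - `|y'|^-1 *: y').
  by rewrite addrA subrK.
apply: (le_lt_trans (ler_normD _ _)).
have -> : `|y' - `|y'|^-1 *: y'| = `|(`|y'| - 1)|.
  rewrite -{1}(scale1r y') -scalerBl normrZ -{2}(ger0_norm (ltW t0)).
  by rewrite -normrM mulrBl mul1r mulVf // gt_eqF.
have : `|x n - y'| + `|(`|y'| - 1)| < e' + e' by apply: ltr_leD => //; apply: le_trans ny' (ltW xy').
move/lt_le_trans; apply; rewrite -mulr2n -mulr_natr; move: e'2; rewrite ler_pdivlMr //.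
Qed.

End P1.

Section P2.
Variable R : realType.

Lemma sum_reindex (I J : finType) (f : I -> J) (G : J -> R) (H : I -> R) :
  injective f -> (forall i, G (f i) = H i) ->
  (forall j, (forall i, f i != j) -> G j = 0) -> \sum_j G j = \sum_i H i.
Proof.
move=> finj GH G0.
transitivity (\sum_j \sum_i (if f i == j then H i else 0)).
  apply: eq_bigr => j _.
  case: (pselect (exists i, f i = j)) => [[i <-]|nex].
    rewrite (bigD1 i) //= eqxx big1 ?addr0 ?GH // => i' ne.
    by rewrite (inj_eq finj) (negbTE ne).
  rewrite big1 ?G0 // => [i|i _]; case: eqP => // e; exfalso; apply: nex; by exists i.
rewrite exchange_big; apply: eq_bigr => i _.
rewrite (bigD1 (f i)) //= eqxx big1 ?addr0 // => j nj.
by rewrite eq_sym (negbTE nj).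
Qed.

Lemma bigmax0_ge0 (I : finType) (F : I -> R) : (forall i, 0 <= F i) ->
  0 <= \big[Num.max/0]_i F i.
Proof.
move=> F0; apply: (big_ind (fun x : R => 0 <= x)) => // u v hu hv.
by rewrite le_max hu.
Qed.

Lemma max_reindex (I J : finType) (f : I -> J) (G : J -> R) (H : I -> R) :
  (forall j, 0 <= G j) -> (forall i, 0 <= H i) -> (forall i, G (f i) = H i) ->
  (forall j, (forall i, f i != j) -> G j = 0) ->
  \big[Num.max/0]_j G j = \big[Num.max/0]_i H i.
Proof.
move=> Gp Hp GH G0; apply/le_anti/andP; split.
  apply/bigmax_leP; split; first exact: bigmax0_ge0 Hp.
  move=> j _; case: (pselect (exists i, f i = j)) => [[i <-]|nex].
    by rewrite GH; apply: le_bigmax.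
  rewrite G0; first exact: bigmax0_ge0 Hp.
  by move=> i; apply/eqP => e; apply: nex; exists i.
apply/bigmax_leP; split; first exact: bigmax0_ge0 Gp.
by move=> i _; rewrite -GH; apply: le_bigmax.
Qed.

Lemma lpnorm_reindex (p : \bar R) (I J : finType) (f : I -> J) (a : I -> R) (b : J -> R) :
  (1 <= p)%E -> injective f -> (forall i, b (f i) = a i) ->
  (forall j, (forall i, f i != j) -> b j = 0) -> lpnorm p b = lpnorm p a.
Proof.
move=> p1 finj ba b0; case: p p1 => [q|//|//] q1 /=.
  congr (_ `^ _); apply: (sum_reindex finj) => [i|j nj]; first by rewrite ba.
  rewrite b0 // normr0 powR0 //; apply/negP => /eqP q0; move: q1.
  by rewrite q0 lee_fin ler10.
apply: (@max_reindex _ _ f) => // [i|j nj]; first by rewrite ba.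
by rewrite b0 // normr0.
Qed.

Lemma lpnorm_unit (p : \bar R) (I : finType) (i0 : I) :
  (1 <= p)%E -> lpnorm p (fun i => if i == i0 then 1 else 0) = 1.
Proof.
move=> p1.
rewrite (@lpnorm_reindex p 'I_1 I (fun _ => i0) (fun _ => 1)) //.
- case: p p1 => [q|//|//] q1 /=.
    by rewrite big_ord1 normr1 !powR1.
  rewrite normr1; apply/le_anti/andP; split; first by apply/bigmax_leP; split.
  exact: (le_bigmax _ (fun _ : 'I_1 => (1 : R)) ord0).
- by move=> i j _; apply/val_inj; rewrite /= !ord1.
- by move=> i; rewrite eqxx.
- move=> j nj; case: eqP => // e; exfalso; move: (nj ord0); by rewrite e eqxx.
Qed.

End P2.

Section P3.
Variables (R : realType) (X : normedModType R).

Lemma mkseq_eq_in (T : Type) (f g : nat -> T) n :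
  (forall i, (i < n)%N -> f i = g i) -> mkseq f n = mkseq g n.
Proof.
move=> fg; rewrite /mkseq; apply/eq_in_map => i; rewrite mem_iota add0n.
exact: fg.
Qed.

Lemma play (sigma : seq X -> set X) (eps : R) (T : nat) (v : nat -> nat -> X) :
  (forall h, fin_codim_closed (sigma h)) ->
  (forall r (Y : set X), fin_codim_closed Y -> exists N, forall t, (N <= t)%N ->
     exists y, Y y /\ `|y| = 1 /\ `|v r t - y| < eps) ->
  forall n, exists (u : nat -> nat) (y : nat -> X),
    (forall r, (r < n)%N -> sigma (mkseq y r) (y r) /\ `|y r| = 1 /\
        `|v r (u r) - y r| < eps) /\
    (forall r, (r.+1 < n)%N -> (u r < u r.+1)%N) /\ (T <= u 0)%N.
Proof.
move=> sfc hv; elim=> [|n [u [y [h1 [h2 h3]]]]].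
  by exists (fun=> T), (fun=> 0); split.
have [N hN] := hv n _ (sfc (mkseq y n)).
pose t := maxn N (maxn T (u n.-1).+1).
have [yn [Yyn [yn1 hyn]]] := hN t (leq_maxl _ _).
exists (fun r => if r == n then t else u r), (fun r => if r == n then yn else y r).
split; last split.
- move=> r; rewrite ltnS leq_eqVlt => /orP [/eqP ->|rn].
    rewrite eqxx; rewrite (@mkseq_eq_in _ _ y) //.
    by move=> i iN; rewrite (ltn_eqF iN).
  rewrite (ltn_eqF rn) (@mkseq_eq_in _ _ y); first exact: h1.
  by move=> i ir; rewrite (ltn_eqF (ltn_trans ir rn)).
- move=> r; rewrite ltnS leq_eqVlt => /orP [/eqP rn|rn].
    rewrite -rn eqxx (ltn_eqF (ltnSn r)) /=.
    by rewrite /t -rn /= leq_max; apply/orP; right; rewrite leq_max ltnS leqnn orbT.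
  rewrite (ltn_eqF rn) (ltn_eqF (ltn_trans (ltnSn r) rn)); exact: h2.
- case: eqP => [n0|_ //]; rewrite /t; subst n.
  by rewrite leq_max; apply/orP; right; rewrite leq_max leqnn.
Qed.

End P3.

Lemma sum_split (V : zmodType) (G : nat -> V) l K :
  \sum_(r < K * l) G r = \sum_(j < K) \sum_(i < l) G (j * l + i)%N.
Proof.
elim: K => [|K IH]; first by rewrite mul0n !big_ord0.
by rewrite mulSnr big_split_ord /= IH big_ord_recr.
Qed.

Lemma sum_pad (V : zmodType) k K (H : nat -> V) : (k <= K)%N ->
  (forall j, (k <= j)%N -> H j = 0) -> \sum_(j < K) H j = \sum_(j < k) H j.
Proof.
move=> kK H0; rewrite (big_ord_widen K H kK) [in RHS]big_mkcond /=.
apply: eq_bigr => j _; case: ifP => // /negbT; rewrite -leqNgt => kj.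
by rewrite H0.
Qed.

Lemma sum_unit (R : ringType) (V : lmodType R) n (i0 : 'I_n) (y : nat -> V) :
  \sum_(i < n) (if i == i0 then 1 else 0) *: y i = y i0.
Proof.
rewrite (bigD1 i0) //= eqxx scale1r big1 ?addr0 // => i /negbTE ->.
by rewrite scale0r.
Qed.

From mathcomp Require Import zify.

Lemma idx_lt (j i l K : nat) : (j < K)%N -> (i < l)%N -> (j * l + i < K * l)%N.
Proof. move=> jK il; nia. Qed.

Lemma idx_lt2 (j1 i1 j2 i2 l : nat) : (j1 < j2)%N -> (i1 < l)%N -> (j1 * l + i1 < j2 * l + i2)%N.
Proof. move=> h1 h2; nia. Qed.

Lemma idx_div (j i l : nat) : (i < l)%N -> ((j * l + i) %/ l = j)%N.
Proof. by move=> il; rewrite divnMDl ?(leq_ltn_trans _ il) // divn_small // addn0. Qed.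

Lemma idx_mod (j i l : nat) : (i < l)%N -> ((j * l + i) %% l = i)%N.
Proof. by move=> il; rewrite modnMDl modn_small. Qed.

Lemma strict_mono_lt (f : nat -> nat) : (forall t, (f t < f t.+1)%N) ->
  forall a b, (a < b)%N -> (f a < f b)%N.
Proof. by move=> h; apply: (homo_ltn (@ltn_trans) h). Qed.

Lemma strict_mono_le (f : nat -> nat) : (forall t, (f t < f t.+1)%N) ->
  forall a b, (a <= b)%N -> (f a <= f b)%N.
Proof.
move=> h a b; rewrite leq_eqVlt => /orP [/eqP -> //|ab].
by apply: ltnW; apply: strict_mono_lt.
Qed.

Lemma strict_mono_id (f : nat -> nat) : (forall t, (f t < f t.+1)%N) ->
  forall t, (t <= f t)%N.
Proof. by move=> h; elim=> // t IH; apply: leq_ltn_trans IH (h t). Qed.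

Lemma strict_mono_lt_in (f : nat -> nat) n : (forall r, (r.+1 < n)%N -> (f r < f r.+1)%N) ->
  forall a b, (a < b)%N -> (b < n)%N -> (f a < f b)%N.
Proof.
move=> h a; elim=> // b IH; rewrite ltnS leq_eqVlt => /orP [/eqP <- bn|ab bn].
  exact: h.
by apply: ltn_trans (IH ab (ltnW bn)) (h _ bn).
Qed.

Lemma lpnorm_ge0 (R : realType) (p : \bar R) (I : finType) (a : I -> R) : 0 <= lpnorm p a.
Proof.
case: p => [q||] /=; [exact: powR_ge0| |by []].
by apply: bigmax0_ge0 => i.
Qed.

Lemma sum_scale2 (R : realType) (V : normedModType R) (l K : nat) (t : R)
  (A : 'I_l -> nat -> R) (F : 'I_l -> nat -> V) :
  \sum_(j < K) \sum_(i < l) (t * A i j) *: F i j =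
  t *: \sum_(j < K) \sum_(i < l) A i j *: F i j.
Proof.
rewrite scaler_sumr; apply: eq_bigr => j _; rewrite scaler_sumr.
by apply: eq_bigr => i _; rewrite scalerA.
Qed.

Lemma core (R : realType) (p : \bar R) (X : normedModType R) (C : R) (l : nat)
  (xs : 'I_l -> nat -> X) (E : normedModType R) (e : 'I_l -> nat -> E) :
  (1 <= p)%E -> 1 <= C -> (forall n, exists sigma : seq X -> set X, winning_strategy p n C sigma) ->
  (0 < l)%N -> (forall i, F0 (xs i)) -> jsm_generates xs e ->
  forall k (a : 'I_l -> 'I_k -> R) (eta : R), 0 < eta ->
   C^-1 * lpnorm p (fun ij : 'I_l * 'I_k => a ij.1 ij.2) - eta
     <= `|\sum_(j < k) \sum_(i < l) a i j *: e i (val j)| /\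
   `|\sum_(j < k) \sum_(i < l) a i j *: e i (val j)|
     <= C * lpnorm p (fun ij : 'I_l * 'I_k => a ij.1 ij.2) + eta.
Proof.
move=> p1 C1 hgame l0 hF [m [mono [delta [dcvg hjsm]]]] k a eta eta0.
have C0 : 0 < C by apply: lt_le_trans C1.
set lp := lpnorm p _.
set orig := `|_|.
pose S := \sum_(ij : 'I_l * 'I_k) `|a ij.1 ij.2|.
have S0 : 0 <= S by apply: sumr_ge0.
pose t := (1 + S)^-1.
have t0 : 0 < t by rewrite invr_gt0 ltr_pwDl.
pose A (i : 'I_l) (j : nat) : R := oapp (a i) 0 (insub j).
have Ab i j : `|t * A i j| <= 1.
  rewrite normrM gtr0_norm // /t -[X in _ <= X](@mulVf _ (1 + S)); last first.
    by rewrite gt_eqF // ltr_pwDl.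
  apply: ler_wpM2l; first exact: ltW.
  rewrite /A; case: insubP => [j' _ _|_] /=; last by rewrite normr0 ltW // ltr_pwDl.
  apply: le_trans (ler_wpDl ler01 (lexx _)); rewrite /S (bigD1 (i, j')) //=.
  by rewrite lerDl; apply: sumr_ge0.
have [K0 hK0] : exists K0, forall K, (K0 <= K)%N -> `|delta K| < t * eta / 2.
  move: (dcvg) => /cvgr0Pnorm_lt /(_ (t * eta / 2)).
  rewrite divr_gt0 ?mulr_gt0 // => /(_ isT) [K0 _ hK0]; exists K0 => K KK0.
  exact: hK0.
pose K := maxn (maxn K0 k) 1.
have kK : (k <= K)%N by rewrite /K !leq_max leqnn orbT.
have K0K : (K0 <= K)%N by rewrite /K !leq_max leqnn.
have K1 : (0 < K)%N by rewrite /K !leq_max leqnn orbT.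
pose n := (K * l)%N.
have n0 : (0 < n)%N by rewrite muln_gt0 K1.
have [sigma [sfc win]] := hgame n.
pose eps := t * eta / (2 * (n%:R + 1)).
have eps0 : 0 < eps by rewrite divr_gt0 ?mulr_gt0 // ltr_pwDl.
pose ordl (r : nat) : 'I_l := Ordinal (ltn_pmod r l0).
pose v r tt := xs (ordl r) (m tt).
have hv : forall r (Y : set X), fin_codim_closed Y -> exists N, forall tt, (N <= tt)%N ->
     exists y, Y y /\ `|y| = 1 /\ `|v r tt - y| < eps.
  move=> r Y fY; have [x1 [wx _]] := hF (ordl r).
  have [N hN] := KL1 fY wx x1 eps0; exists N => tt Ntt; apply: hN.
  exact: leq_trans Ntt (strict_mono_id mono tt).
have [u [y [hy [hu hu0]]]] := play K.-1 sfc hv n.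
pose s (i : 'I_l) (j : 'I_K) := m (u (j * l + i)%N).
have ulti r1 r2 : (r1 < r2)%N -> (r2 < n)%N -> (u r1 < u r2)%N.
  by move=> h1 h2; apply: (strict_mono_lt_in hu).
have idxn (i : 'I_l) (j : 'I_K) : (j * l + i < n)%N by apply: idx_lt.
have plg : strict_plegma m s.
  split; first by move=> i j; exists (u (j * l + i)%N).
  split.
    move=> i1 i2 j1 j2 j12; apply: strict_mono_lt => //; apply: ulti => //.
    exact: idx_lt2.
  move=> i1 i2 j i12; apply: strict_mono_lt => //; apply: ulti => //.
  by rewrite ltn_add2l.
have slow (i0 : 'I_l) (j0 : 'I_K) : val i0 = 0%N -> val j0 = 0%N -> (m K.-1 <= s i0 j0)%N.
  by move=> h1 h2; rewrite /s h1 h2 mul0n addn0; apply: strict_mono_le.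
pose a' (i : 'I_l) (j : 'I_K) := t * A i j.
have hj := hjsm K a' s (fun i j => Ab i j) plg slow.
have [c [C' [c0 [C'0 [cC hb]]]]] : equiv_lp_fin p C n y.
  apply: win => r rn; have [h1 [h2 _]] := hy r rn; by split.
pose r0 : 'I_n := Ordinal n0.
have [hc1 hC1] := hb (fun r => if r == r0 then 1 else 0).
rewrite lpnorm_unit // sum_unit mulr1 (hy r0 n0).2.1 in hc1 hC1.
rewrite mulr1 in hC1.
have Cc : C' <= C * c by rewrite -ler_pdivrMr.
have cinv : C^-1 <= c.
  rewrite -(ler_pM2l C0) mulfV ?gt_eqF //; exact: le_trans hC1 Cc.
have CC : C' <= C by apply: le_trans Cc _; rewrite ler_piMr // ltW.
have ordlE (i : 'I_l) (j : nat) : ordl (j * l + i)%N = i.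
  by apply/val_inj; rewrite /= idx_mod.
pose b (r : 'I_n) := A (ordl r) (r %/ l)%N.
have Sy : \sum_(r < n) b r *: y r = \sum_(j < K) \sum_(i < l) A i j *: y (j * l + i)%N.
  rewrite /b (sum_split (fun r => A (ordl r) (r %/ l)%N *: y r)).
  apply: eq_bigr => j _; apply: eq_bigr => i _; by rewrite ordlE idx_div.
pose f (ij : 'I_l * 'I_k) : 'I_n :=
  Ordinal (idx_lt (leq_trans (ltn_ord ij.2) kK) (ltn_ord ij.1)).
have lpb : lpnorm p b = lp.
  rewrite /lp; apply: (@lpnorm_reindex _ p _ _ f) => //.
  - move=> [i1 j1] [i2 j2] /(congr1 val) /= Eq.
    have := congr1 (fun r => r %% l)%N Eq; have := congr1 (fun r => r %/ l)%N Eq.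
    rewrite /= !idx_div ?idx_mod // => hjj hii.
    by congr pair; apply/val_inj.
  - move=> [i j]; rewrite /b /f /= ordlE idx_div // /A valK //.
  - move=> r nr; rewrite /b /A; case: insubP => [j' jk jE|] //=; exfalso.
    apply/negP: (nr (ordl r, j')); apply/negPn/eqP/val_inj => /=.
    by rewrite jE [in RHS](divn_eq r l).
have [hbl hbu] := hb b; rewrite lpb Sy in hbl hbu.
set Ny := `|\sum_(j < K) \sum_(i < l) A i j *: y (j * l + i)%N| in hbl hbu.
set Sx := \sum_(j < K) \sum_(i < l) a' i j *: xs i (s i j) in hj.
have eSE : `|\sum_(j < K) \sum_(i < l) a' i j *: e i (val j)| = t * orig.
  rewrite (sum_scale2 K t A (fun i j => e i j)) normrZ gtr0_norm //; congr (_ * _).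
  rewrite /orig (@sum_pad _ k K (fun j => \sum_(i < l) A i j *: e i j) kK).
    congr `|_|; apply: eq_bigr => j _; apply: eq_bigr => i _.
    by rewrite /A valK.
  move=> j kj; apply: big1 => i _; rewrite /A insubF ?scale0r //.
  by apply/negbTE; rewrite -leqNgt.
rewrite eSE in hj.
pose Sy' := \sum_(j < K) \sum_(i < l) a' i j *: y (j * l + i)%N.
have eSy : `|Sy'| = t * Ny.
  by rewrite /Sy' (sum_scale2 K t A (fun i j => y (j * l + i)%N)) normrZ gtr0_norm.
have dS : `|Sx - Sy'| <= eps * n%:R.
  rewrite /Sx /Sy' -sumrB.
  apply: le_trans (ler_norm_sum _ _ _) _.
  apply: (@le_trans _ _ (\sum_(j < K) \sum_(i < l) eps)); last first.
    by rewrite !sumr_const !card_ord -mulrnA mulr_natr /n mulnC.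
  apply: ler_sum => j _; rewrite -sumrB; apply: le_trans (ler_norm_sum _ _ _) _.
  apply: ler_sum => i _; rewrite -scalerBr normrZ.
  rewrite -[X in _ <= X]mul1r; apply: ler_pM => //; first exact: Ab.
  have [_ [_ hh]] := hy _ (idxn i j); move: hh; rewrite /v ordlE => hh.
  exact: ltW.
have epsn : eps * n%:R < t * eta / 2.
  have hN : 0 <= (n%:R : R) by [].
  have he : eps * (2 * (n%:R + 1)) = t * eta.
    by rewrite /eps divfK // mulf_neq0 // gt_eqF // ltr_pwDl.
  have : 0 < t * eta by rewrite mulr_gt0.
  lra.
have h1 : `|(`|Sx| - `|Sy'|)| < t * eta / 2.
  by apply: le_lt_trans (ler_dist_dist _ _) _; apply: le_lt_trans dS epsn.
have h2 : `|(`|Sx| - t * orig)| < t * eta / 2.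
  by apply: lt_trans hj _; apply: le_lt_trans (ler_norm _) (hK0 K K0K).
rewrite eSy in h1.
move: h1 h2; rewrite !ltr_distl => /andP [h1a h1b] /andP [h2a h2b].
have lo : t * (Ny - eta) < t * orig by lra.
have hi : t * orig < t * (Ny + eta) by lra.
rewrite ltr_pM2l // in lo; rewrite ltr_pM2l // in hi.
have lp0 : 0 <= lp by apply: lpnorm_ge0.
have c1 : C^-1 * lp <= c * lp by apply: ler_wpM2r.
have c2 : C' * lp <= C * lp by apply: ler_wpM2r.
split; lra.
Qed.

Lemma le_of_eta (R : realType) (x y : R) : (forall eta, 0 < eta -> x - eta <= y) -> x <= y.
Proof.
move=> h; rewrite leNgt; apply/negP => yx.
have e0 : 0 < (x - y) / 2 by rewrite divr_gt0 // subr_gt0.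
have := h _ e0; lra.
Qed.

Lemma le_of_eta2 (R : realType) (x y : R) : (forall eta, 0 < eta -> x <= y + eta) -> x <= y.
Proof.
move=> h; apply: le_of_eta => eta eta0; have := h eta eta0; lra.
Qed.

Close Scope classical_set_scope.

Theorem corollary4p12 (R : realType) (X : completeNormedModType R) (p : \bar R) :
  (1 <= p)%E -> asymptotic_lp p X ->
  uniformly_unique_jsm X /\
  (forall (l : nat) (xs : 'I_l -> nat -> X)
          (E : completeNormedModType R) (e : 'I_l -> nat -> E),
     (0 < l)%N -> (forall i, F0 (xs i)) -> jsm_generates xs e ->
     equiv_lp_basis p e).
Proof.
move=> p1 [C [C1 hgame]].
have C0 : 0 < C by apply: lt_le_trans C1.
have Ci0 : 0 < C^-1 by rewrite invr_gt0.
have eqv : forall l (xs : 'I_l -> nat -> X) (E : normedModType R) (e : 'I_l -> nat -> E),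
    (0 < l)%N -> (forall i, F0 (xs i)) -> jsm_generates xs e ->
    forall k (a : 'I_l -> 'I_k -> R),
      C^-1 * lpnorm p (fun ij : 'I_l * 'I_k => a ij.1 ij.2)
        <= `|\sum_(j < k) \sum_(i < l) a i j *: e i (val j)| /\
      `|\sum_(j < k) \sum_(i < l) a i j *: e i (val j)|
        <= C * lpnorm p (fun ij : 'I_l * 'I_k => a ij.1 ij.2).
  move=> l xs E e l0 hF hj k a; split.
    by apply: le_of_eta => eta eta0; have [] := core p1 C1 hgame l0 hF hj a eta0.
  by apply: le_of_eta2 => eta eta0; have [] := core p1 C1 hgame l0 hF hj a eta0.
split; last first.
  move=> l xs E e l0 hF hj; exists C^-1, C; split => //; split => //.
  exact: eqv.
exists ((C * C) / (C^-1 * C^-1)); split; first by rewrite divr_gt0 ?mulr_gt0.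
move=> l l0 xs ys E1 e1 E2 e2 hx hy j1 j2.
exists (C^-1 * C^-1), (C * C); split; first by rewrite mulr_gt0.
split; first by rewrite mulr_gt0.
split; first by [].
move=> k a.
have [a1 b1] := eqv _ _ _ _ l0 hx j1 k a.
have [a2 b2] := eqv _ _ _ _ l0 hy j2 k a.
set lp := lpnorm p _ in a1 b1 a2 b2 *.
set N1 := `|_| in a1 b1 *; set N2 := `|_| in a2 b2 *.
have lp0 : 0 <= lp by apply: lpnorm_ge0.
have i1 : C^-1 * C^-1 * N1 <= C^-1 * C^-1 * (C * lp).
  by apply: ler_wpM2l => //; rewrite mulr_ge0 // ltW.
have i2 : C * C * (C^-1 * lp) <= C * C * N1.
  by apply: ler_wpM2l => //; rewrite mulr_ge0 // ltW.
have e1' : C^-1 * C^-1 * (C * lp) = C^-1 * lp.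
  by rewrite -mulrA (mulrA C^-1 C) mulVf ?gt_eqF // mul1r.
have e2' : C * C * (C^-1 * lp) = C * lp.
  by rewrite -mulrA (mulrA C C^-1) mulfV ?gt_eqF // mul1r.
rewrite e1' in i1; rewrite e2' in i2.
split; [exact: le_trans i1 a2 | exact: le_trans b2 i2].
Qed.
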